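(* Let $M$ be a left Ehresmann monoid with semilattice of projections $E$ and let $T$ be a submonoid of $M$ with $M=\langle E\cup T\rangle_{(2)}$, such that $M$ has uniqueness of $T$-normal forms. Define a unary operation $*$ on $M$ as follows: if $a=t_0e_1t_1\cdots t_{n-1}e_nt_n$ is the $T$-normal form of $a$, put $a^*=e_n$ if $n\ge1$ and $t_n=1$, and $a^*=1$ otherwise. Then $M$, with $+$ and $*$, is a $*$-left Ehresmann monoid; in particular $a^*$ is the least right identity of $a$ in $E$.
   Context: A left Ehresmann monoid is a monoid $M$ with a unary operation $a\mapsto a^+$ satisfying $x^+x=x$, $(x^+y^+)^+=x^+y^+$, $x^+y^+=y^+x^+$, $(xy)^+=(xy^+)^+$; $E=\{a^+:a\in M\}$ is a semilattice (ordered by $e\le f$ iff $ef=e$). $\langle A\rangle_{(2)}$ is the subsemigroup generated by $A$. For a submonoid $T$ with $M=\langle E\cup T\rangle_{(2)}$, a $T$-normal form of $a\in M$ is an expression $a=t_0e_1t_1\cdots e_nt_n$ with $n\ge0$, $e_1,\dots,e_n\in E\setminus\{1\}$, $t_1,\dots,t_{n-1}\in T\setminus\{1\}$, $t_0,t_n\in T$ and $e_i<(t_ie_{i+1}\cdots e_nt_n)^+$ for $1\le i\le n$; $M$ has uniqueness of $T$-normal forms if each element has exactly one such expression (as a sequence). A $*$-left Ehresmann monoid is a monoid with two unary operations $+,*$ such that $(M,+)$ is left Ehresmann, $M$ satisfies $xx^*=x$, $(x^* )^*=x^*$, $x^*y^*=y^*x^*$, $(xy^* )^*y^*=(xy^*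 )^*$ (equivalently $\{a^*\}$ is a semilattice and $a^*$ is the least right identity of $a$ in it), and $(x^* )^+=x^*$, $(x^+)^*=x^+$. *)

(* Defs.v *)
From Stdlib Require Import List.
Import ListNotations.
Set Implicit Arguments.

Section Defs.
Variables (M : Type) (mul : M -> M -> M) (one : M).

Definition is_monoid : Prop :=
  (forall x y z, mul x (mul y z) = mul (mul x y) z) /\
  (forall x, mul one x = x) /\ (forall x, mul x one = x).

Definition is_left_ehresmann (plus : M -> M) : Prop :=
  is_monoid /\
  (forall x, mul (plus x) x = x) /\
  (forall x y, plus (mul (plus x) (plus y)) = mul (plus x) (plus y)) /\
  (forall x y, mul (plus x) (plus y) = mul (plus y) (plus x)) /\
  (forall x y, plus (mul x y) = plus (mul x (plus y))).

Definition inE (plus : M -> M) (e : M) : Prop := exists a, e = plus a.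

Definition sl_le (e f : M) : Prop := mul e f = e.
Definition sl_lt (e f : M) : Prop := sl_le e f /\ e <> f.

Definition is_submonoid (T : M -> Prop) : Prop :=
  T one /\ (forall x y, T x -> T y -> T (mul x y)).

Inductive gen2 (A : M -> Prop) : M -> Prop :=
| gen2_base : forall x, A x -> gen2 A x
| gen2_mul : forall x y, gen2 A x -> gen2 A y -> gen2 A (mul x y).

(* An expression t0 e1 t1 ... en tn is coded by t0 and the list
   [(e1,t1); ...; (en,tn)].  prod_tail l = e_i t_i ... e_n t_n. *)
Fixpoint prod_tail (l : list (M * M)) : M :=
  match l with
  | [] => one
  | (e, t) :: l' => mul e (mul t (prod_tail l'))
  end.

Definition eval_expr (t0 : M) (l : list (M * M)) : M := mul t0 (prod_tail l).

Fixpoint nf_conds (plus : M -> M) (T : M -> Prop) (l : list (M * M)) : Prop :=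
  match l with
  | [] => True
  | (e, t) :: l' =>
      inE plus e /\ e <> one /\ T t /\ (l' <> [] -> t <> one) /\
      sl_lt e (plus (mul t (prod_tail l'))) /\ nf_conds plus T l'
  end.

Definition is_TNF (plus : M -> M) (T : M -> Prop) (a t0 : M)
  (l : list (M * M)) : Prop :=
  a = eval_expr t0 l /\ T t0 /\ nf_conds plus T l.

Definition unique_TNF (plus : M -> M) (T : M -> Prop) : Prop :=
  forall a, (exists t0 l, is_TNF plus T a t0 l) /\
    (forall t0 l t0' l', is_TNF plus T a t0 l -> is_TNF plus T a t0' l' ->
       t0 = t0' /\ l = l').

Definition star_value (l : list (M * M)) (s : M) : Prop :=
  (l = [] /\ s = one) \/
  (exists l' e t, l = l' ++ [(e, t)] /\
     ((t = one /\ s = e) \/ (t <> one /\ s = one))).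

Definition is_star_left_ehresmann (plus star : M -> M) : Prop :=
  is_left_ehresmann plus /\
  (forall x, mul x (star x) = x) /\
  (forall x, star (star x) = star x) /\
  (forall x y, mul (star x) (star y) = mul (star y) (star x)) /\
  (forall x y, mul (star (mul x (star y))) (star y) = star (mul x (star y))) /\
  (forall x, plus (star x) = star x) /\
  (forall x, star (plus x) = plus x).

End Defs.

(* Main.v *)
Require Import Defs.
From Stdlib Require Import List Classical.
Import ListNotations.
Set Implicit Arguments.

Section Proof.
Variables (M : Type) (mul : M -> M -> M) (one : M) (plus : M -> M) (T : M -> Prop).
Hypothesis HLE : is_left_ehresmann mul one plus.
Hypothesis HT : is_submonoid mul one T.
Local Notation "x ** y" := (mul x y) (at level 40, left associativity).
Local Notation pt := (prod_tail mul one).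
Local Notation E := (inE plus).

Lemma assoc x y z : x ** (y ** z) = x ** y ** z.
Proof. destruct HLE as [[H _] _]. apply H. Qed.
Lemma l1 x : one ** x = x.
Proof. destruct HLE as [[_ [H _]] _]. apply H. Qed.
Lemma r1 x : x ** one = x.
Proof. destruct HLE as [[_ [_ H]] _]. apply H. Qed.
Lemma pl_mul x : plus x ** x = x.
Proof. destruct HLE as [_ [H _]]. apply H. Qed.
Lemma pl_idem x y : plus (plus x ** plus y) = plus x ** plus y.
Proof. destruct HLE as [_ [_ [H _]]]. apply H. Qed.
Lemma pl_comm x y : plus x ** plus y = plus y ** plus x.
Proof. destruct HLE as [_ [_ [_ [H _]]]]. apply H. Qed.
Lemma pl_r x y : plus (x ** y) = plus (x ** plus y).
Proof. destruct HLE as [_ [_ [_ [_ H]]]]. apply H. Qed.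

Lemma plus_one : plus one = one.
Proof. rewrite <- (r1 (plus one)). apply pl_mul. Qed.
Lemma E_plus e : E e -> plus e = e.
Proof.
  intros [a ->]. rewrite <- (r1 (plus a)) at 1. rewrite <- plus_one.
  rewrite pl_idem, plus_one, r1. reflexivity.
Qed.
Lemma plus_E x : E (plus x).
Proof. exists x. reflexivity. Qed.
Lemma E_one : E one.
Proof. exists one. symmetry. apply plus_one. Qed.
Lemma E_idem e : E e -> e ** e = e.
Proof. intros H. rewrite <- (E_plus H) at 1. apply pl_mul. Qed.
Lemma E_mul e f : E e -> E f -> E (e ** f).
Proof. intros [a ->] [b ->]. exists (plus a ** plus b). symmetry. apply pl_idem. Qed.
Lemma E_comm e f : E e -> E f -> e ** f = f ** e.
Proof. intros [a ->] [b ->]. apply pl_comm. Qed.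
Lemma absorb e f : E e -> E f -> f ** (e ** f) = e ** f.
Proof.
  intros He Hf. rewrite assoc, (E_comm Hf He), <- assoc, (E_idem Hf). reflexivity.
Qed.
Lemma E_mul_ne e f : E e -> E f -> f <> one -> e ** f <> one.
Proof.
  intros He Hf Hn H. apply Hn. rewrite <- (r1 f) at 1. rewrite <- H at 1. rewrite (absorb He Hf). exact H.
Qed.

Lemma pt_app l1' l2 : pt (l1' ++ l2) = pt l1' ** pt l2.
Proof.
  induction l1' as [|[e t] l IH]; simpl.
  - rewrite l1. reflexivity.
  - rewrite IH, !assoc. reflexivity.
Qed.

Definition validl (l : list (M * M)) := forall e t, In (e, t) l -> E e /\ T t.

Lemma nf_valid l : nf_conds mul one plus T l -> validl l.
Proof.
  induction l as [|[e t] l IH]; simpl; intros H e0 t0 Hin.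
  - contradiction.
  - destruct H as (He & _ & Ht & _ & _ & Hl). destruct Hin as [Heq|Hin].
    + injection Heq as -> ->. auto.
    + exact (IH Hl e0 t0 Hin).
Qed.

Lemma norm : forall l, validl l -> exists u l',
  pt l = u ** pt l' /\ T u /\ nf_conds mul one plus T l' /\
  (l = [] -> u = one /\ l' = []) /\
  (forall f, f <> one -> (exists pre, l = pre ++ [(f, one)]) ->
     exists pre g, l' = pre ++ [(g, one)] /\ g <> one /\ sl_le mul g f).
Proof.
  destruct HT as [Tone Tmul].
  induction l as [|[e t] l0 IH]; intros V.
  - exists one, []. simpl. split; [rewrite r1; reflexivity|].
    split; [exact Tone|]. split; [exact I|]. split; [auto|].
    intros f _ [pre Hpre]. destruct pre; discriminate.
  - assert (Ve : E e /\ T t) by (apply V; left; reflexivity).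
    destruct Ve as [He Ht].
    assert (V0 : validl l0) by (intros e0 t0 Hin; apply V; right; exact Hin).
    destruct (IH V0) as (u & l'' & Heq & Tu & Nf & Hnil & Hend).
    assert (Tw : T (t ** u)) by auto.
    assert (pl : pt ((e, t) :: l0) = e ** ((t ** u) ** pt l'')).
    { simpl. rewrite Heq, (assoc t). reflexivity. }
    remember ((t ** u) ** pt l'') as s eqn:Hs.
    remember (t ** u) as w eqn:Hw.
    assert (Hle : e ** plus s ** plus s = e ** plus s)
      by (rewrite <- assoc, (E_idem (plus_E s)); reflexivity).
    destruct (classic (e ** plus s = plus s)) as [HA|HA].
    + exists w, l''. split.
      { rewrite pl. transitivity (e ** (plus s ** s)); [rewrite pl_mul; reflexivity|].
        rewrite assoc, HA, pl_mul. exact Hs. }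
      split; [exact Tw|]. split; [exact Nf|]. split; [intros; discriminate|].
      intros f Hf [pre Hpre]. destruct pre as [|p pre'].
      * simpl in Hpre. injection Hpre as -> -> ->.
        destruct (Hnil eq_refl) as [-> ->]. subst w. simpl in Hs.
        rewrite !r1 in Hs. subst s. rewrite plus_one, r1 in HA. contradiction.
      * simpl in Hpre. injection Hpre as _ Hl0. apply Hend; [exact Hf|].
        exists pre'. exact Hl0.
    + assert (Hne : e ** plus s <> one).
      { intros H1. apply HA. rewrite H1. rewrite <- (l1 (plus s)), <- H1, Hle, H1.
        reflexivity. }
      destruct (classic (w <> one \/ l'' = [])) as [HB|HB].
      * exists one, ((e ** plus s, w) :: l''). split.
        { rewrite pl, l1. simpl. rewrite <- Hs.
          rewrite <- (pl_mul s) at 1. rewrite assoc. reflexivity. }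
        split; [exact Tone|]. simpl. split.
        { split; [apply E_mul; [exact He|apply plus_E]|].
          split; [exact Hne|]. split; [exact Tw|].
          split. { intros Hl. destruct HB as [HB|HB]; [exact HB|contradiction]. }
          split; [|exact Nf]. rewrite <- Hs. split; [exact Hle|exact HA]. }
        split; [intros; discriminate|].
        intros f Hf [pre Hpre]. destruct pre as [|p pre'].
        -- simpl in Hpre. injection Hpre as -> -> ->.
           destruct (Hnil eq_refl) as [-> ->]. exists [], (f ** plus s).
           split; [subst w; rewrite r1; reflexivity|]. split; [exact Hne|].
           unfold sl_le. rewrite <- assoc, (E_comm (plus_E s) He), assoc, (E_idem He).
           reflexivity.
        -- simpl in Hpre. injection Hpre as _ Hl0.
           destruct (Hend f Hf (ex_intro _ pre' Hl0)) as (pre'' & g & Hl'' & Hg & Hgf).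
           exists ((e ** plus s, w) :: pre''), g. rewrite Hl''. auto.
      * assert (Hw1 : w = one) by (apply NNPP; intros H; apply HB; left; exact H).
        assert (Hl3 : l'' <> []) by (intros H; apply HB; right; exact H).
        destruct l'' as [|[f' v] l3]; [contradiction|].
        simpl in Nf. destruct Nf as (Hf' & Hf'1 & Tv & Hv & [Hlt Hneq] & Nf3).
        unfold sl_le in Hlt.
        remember (v ** pt l3) as r eqn:Hr.
        exists one, ((e ** f', v) :: l3). split.
        { rewrite pl, l1, Hs, Hw1, l1. simpl. rewrite <- Hr, assoc. reflexivity. }
        split; [exact Tone|]. simpl. split.
        { split; [apply E_mul; assumption|].
          split; [apply E_mul_ne; assumption|]. split; [exact Tv|].
          split; [exact Hv|]. split; [|exact Nf3]. rewrite <- Hr. split.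
          - unfold sl_le. rewrite <- assoc, Hlt. reflexivity.
          - intros H. apply Hneq. rewrite <- Hlt at 1. rewrite <- H, (absorb He Hf'). reflexivity. }
        split; [intros; discriminate|].
        intros f Hf [pre Hpre]. destruct pre as [|p pre'].
        -- simpl in Hpre. injection Hpre as _ _ Hl0.
           destruct (Hnil Hl0) as [_ H]. discriminate.
        -- simpl in Hpre. injection Hpre as _ Hl0.
           destruct (Hend f Hf (ex_intro _ pre' Hl0)) as (pre'' & g & Hl'' & Hg & Hgf).
           destruct pre'' as [|q pre3].
           ++ simpl in Hl''. injection Hl'' as -> -> ->.
              exists [], (e ** g). split; [reflexivity|].
              split; [apply E_mul_ne; assumption|].
              unfold sl_le in *. rewrite <- assoc, Hgf. reflexivity.
           ++ simpl in Hl''. injection Hl'' as _ ->.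
              exists ((e ** f', v) :: pre3), g. auto.
Qed.

Variable star : M -> M.
Hypothesis HU : unique_TNF mul one plus T.
Hypothesis HS : forall a t0 l, is_TNF mul one plus T a t0 l -> star_value one l (star a).

Lemma pt_last l0 e : pt (l0 ++ [(e, one)]) = pt l0 ** e.
Proof. rewrite pt_app. simpl. rewrite !r1. reflexivity. Qed.

Lemma star_E a : E (star a) /\ a ** star a = a.
Proof.
  destruct (proj1 (HU a)) as (t0 & l & Hn).
  pose proof (HS Hn) as Hv. destruct Hn as (Ha & Tt0 & Nf).
  destruct Hv as [[_ ->] | (l0 & e & t & -> & [[-> ->]|[_ ->]])].
  - split; [apply E_one|apply r1].
  - assert (He : E e).
    { apply (nf_valid _ Nf e one). apply in_or_app. right. left. reflexivity. }
    split; [exact He|]. rewrite Ha. unfold eval_expr. rewrite pt_last.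
    rewrite <- !assoc, (E_idem He). reflexivity.
  - split; [apply E_one|apply r1].
Qed.

Lemma least a e : E e -> a ** e = a -> sl_le mul (star a) e.
Proof.
  intros He Hae. destruct (classic (e = one)) as [->|Hne].
  { unfold sl_le. apply r1. }
  destruct (proj1 (HU a)) as (t0 & l & Hn).
  pose proof Hn as Hn0. destruct Hn0 as (Ha & Tt0 & Nf).
  assert (V : validl (l ++ [(e, one)])).
  { intros e0 t1 Hin. apply in_app_or in Hin. destruct Hin as [Hin|[Heq|[]]].
    - exact (nf_valid _ Nf e0 t1 Hin).
    - injection Heq as -> ->. split; [exact He|apply HT]. }
  destruct (norm V) as (u & l' & Heq & Tu & Nf' & _ & Hend).
  destruct (Hend e Hne (ex_intro _ l eq_refl)) as (pre & g & Hl' & Hg & Hge).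
  assert (Hn' : is_TNF mul one plus T a (t0 ** u) l').
  { split; [|split; [apply HT; assumption|exact Nf']].
    unfold eval_expr. rewrite <- Hae at 1. rewrite Ha. unfold eval_expr.
    rewrite <- assoc, <- pt_last, Heq, assoc. reflexivity. }
  destruct (proj2 (HU a) _ _ _ _ Hn Hn') as [_ Hll].
  pose proof (HS Hn) as Hv. rewrite Hll, Hl' in Hv.
  destruct Hv as [[Hc _] | (l0 & e0 & t & Hc & Hst)].
  - exfalso. exact (app_cons_not_nil _ _ _ (eq_sym Hc)).
  - apply app_inj_tail in Hc. destruct Hc as [_ Hc]. injection Hc as -> ->.
    destruct Hst as [[_ ->]|[Hc _]]; [exact Hge|contradiction].
Qed.

Lemma star_fix e : E e -> star e = e.
Proof.
  intros He. destruct (star_E e) as [Hd Hed].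
  pose proof (least He (E_idem He)) as Hle. unfold sl_le in Hle.
  rewrite <- Hle, (E_comm Hd He). exact Hed.
Qed.

End Proof.

Theorem mainTheorem2 (M : Type) (mul : M -> M -> M) (one : M)
  (plus : M -> M) (T : M -> Prop) (star : M -> M) :
  is_left_ehresmann mul one plus ->
  is_submonoid mul one T ->
  (forall a, gen2 mul (fun x => inE plus x \/ T x) a) ->
  unique_TNF mul one plus T ->
  (forall a t0 l, is_TNF mul one plus T a t0 l -> star_value one l (star a)) ->
  is_star_left_ehresmann mul one plus star /\
  (forall a, inE plus (star a) /\ mul a (star a) = a /\
     (forall e, inE plus e -> mul a e = a -> sl_le mul (star a) e)).
Proof.
  intros HLE HT _ HU HS.
  assert (SE : forall a, inE plus (star a) /\ mul a (star a) = a)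
    by (intros; eapply star_E; eauto).
  assert (LS : forall a e, inE plus e -> mul a e = a -> sl_le mul (star a) e)
    by (intros; eapply least; eauto).
  assert (SF : forall e, inE plus e -> star e = e)
    by (intros; eapply star_fix; eauto).
  split.
  - split; [exact HLE|].
    split; [intros x; apply SE|].
    split; [intros x; apply SF, SE|].
    split; [intros x y; apply (E_comm HLE); apply SE|].
    split.
    { intros x y. apply LS; [apply SE|].
      rewrite <- (assoc HLE), (E_idem HLE (proj1 (SE y))). reflexivity. }
    split; [intros x; apply (E_plus HLE), SE|].
    intros x. apply SF, plus_E.
  - intros a. split; [apply SE|]. split; [apply SE|]. intros e He Hae. apply LS; assumption.
Qed.
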